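(* Assume the standing hypotheses and let $\sigma\in(0,1)$. For $(x,\lambda)\in\mathcal B((x^*,\lambda^* ),\delta)$ with $x>0,\lambda>0$, let $(\Delta x^N,\Delta\lambda^N)$ be the Newton direction for $\mu^+=\sigma\mu$ and define, for each $i$ with $x_i[\nabla^2 f(x)]_{ii}+\lambda_i\neq0$, $$\Delta x_i^S=-\frac{x_i[\nabla f(x)]_i-\mu^+}{x_i[\nabla^2 f(x)]_{ii}+\lambda_i}.$$ Then for every such $i$, $$\Delta x_i^S-\Delta x_i^N=\frac{x_i}{x_i[\nabla^2 f(x)]_{ii}+\lambda_i}\sum_{j\neq i}[\nabla^2 f(x)]_{ij}\Delta x_j^N.$$ Moreover, for every $C_1>0$ there exist $\rho>0$, $\bar\mu\in(0,\hat\mu]$ and constants $0<c\le C$ such that for all $\mu\in(0,\bar\mu]$ and all $(x,\lambda)\in\mathcal B((x^*,\lambda^* ),\delta)$ with $x>0,\lambda>0$, $\|(x,\lambda)-(x^\mu,\lambda^\mu)\|<\rho$, $\|F_\mu(x,\lambda)\|\le C_1\mu$: for all $i=1,\dots,n$, $c\le \big(x_i[\nabla^2f(x)]_{ii}+\lambda_i\big)^{-1}\le C$ (in particular the denominator is nonzero), and $|\Delta x_i^S-\Delta x_i^N|\le C\mu^2$ for all $i\in\mathcal A$.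
   Context: Problem: minimize $f(x)$ subject to $x\ge0$, $f:\mathbb R^n\to\mathbb R$ twice continuously differentiable with locally Lipschitz Hessian. Norms Euclidean; $e$ all-ones; $X=\mathrm{diag}(x)$, $\Lambda=\mathrm{diag}(\lambda)$; $F_\mu(x,\lambda)=\begin{bmatrix}\nabla f(x)-\lambda\\ \Lambda Xe-\mu e\end{bmatrix}$, $F'(x,\lambda)=\begin{bmatrix}\nabla^2f(x)&-I\\ \Lambda&X\end{bmatrix}$. The Newton direction for $\mu^+=\sigma\mu$ solves $F'(x,\lambda)(\Delta x^N,\Delta\lambda^N)=-F_{\mu^+}(x,\lambda)$. Standing hypotheses: $(x^*,\lambda^* )$ satisfies $\nabla f(x^* )=\lambda^*$, $x^*\ge0$, $\lambda^*\ge0$, $x_i^*\lambda_i^*=0$, $x^*+\lambda^*>0$, $[\nabla^2f(x^* )]_{\mathcal I\mathcal I}\succ0$, where $\mathcal A=\{i:x^*_i=0\}$, $\mathcal I=\{i:x_i^*>0\}$. $\delta>0$: $F'$ nonsingular on $\mathcal B((x^*,\lambda^* ),\delta)$ with $\|F'^{-1}\|\le M$; $\hat\mu>0$: for $\mu\in(0,\hat\mu]$ a Lipschitz barrier trajectory $(x^\mu,\lambda^\mu)\in\mathcal B((x^*,\lambda^* ),\delta)$ with $F_\mu(x^\mu,\lambda^\mu)=0$, $\|(x^\mu,\lambda^\mu)-(x^*,\lambda^* )\|\le C_4\mu$ exists. *)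

(* Defs.v *)
From HB Require Import structures.
From mathcomp Require Import all_boot all_order all_algebra.
From mathcomp Require Import all_classical all_reals all_analysis.
Set Implicit Arguments. Unset Strict Implicit. Unset Printing Implicit Defensive.
Import Order.TTheory GRing.Theory Num.Theory.
Import numFieldNormedType.Exports.
Local Open Scope ring_scope.

Section Defs.
Variables (R : realType) (n : nat).

Definition evec (i : 'I_n) : 'cV[R]_n := delta_mx i 0.

Definition enorm (v : 'cV[R]_n) : R := Num.sqrt (\sum_i v i 0 ^+ 2).

Definition enorm2 (x l : 'cV[R]_n) : R :=
  Num.sqrt (\sum_i x i 0 ^+ 2 + \sum_i l i 0 ^+ 2).

Definition enormN (v : 'cV[R]_(n + n)) : R := Num.sqrt (\sum_i v i 0 ^+ 2).

Definition grad (f : 'cV[R]_n -> R) (x : 'cV[R]_n) : 'cV[R]_n :=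
  \col_i 'D_(evec i) f x.

Definition hess (f : 'cV[R]_n -> R) (x : 'cV[R]_n) : 'M[R]_n :=
  \matrix_(i, j) 'D_(evec j) (fun y => 'D_(evec i) f y) x.

Definition twice_cont_diff (f : 'cV[R]_n -> R) : Prop :=
  (forall x, differentiable f x) /\
  (forall i x, differentiable (fun y => 'D_(evec i) f y) x) /\
  (forall i j, continuous (fun y => 'D_(evec j) (fun z => 'D_(evec i) f z) y)).

Definition hess_loc_lipschitz (f : 'cV[R]_n -> R) : Prop :=
  forall x0 : 'cV[R]_n, exists r : R, exists L : R, 0 < r /\
    forall y z : 'cV[R]_n, enorm (y - x0) < r -> enorm (z - x0) < r ->
      forall w : 'cV[R]_n,
        enorm ((hess f y - hess f z) *m w) <= L * enorm (y - z) * enorm w.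

Definition dg (x : 'cV[R]_n) : 'M[R]_n := diag_mx x^T.

Definition Fmu (f : 'cV[R]_n -> R) (mu : R) (x l : 'cV[R]_n) : 'cV[R]_(n + n) :=
  col_mx (grad f x - l) (\col_i (l i 0 * x i 0 - mu)).

Definition Fprime (f : 'cV[R]_n -> R) (x l : 'cV[R]_n) : 'M[R]_(n + n) :=
  block_mx (hess f x) (- 1%:M) (dg l) (dg x).

Definition newton_dir (f : 'cV[R]_n -> R) (mup : R) (x l dx dl : 'cV[R]_n) : Prop :=
  Fprime f x l *m col_mx dx dl = - Fmu f mup x l.

Definition denom (f : 'cV[R]_n -> R) (x l : 'cV[R]_n) (i : 'I_n) : R :=
  x i 0 * hess f x i i + l i 0.

Definition dxS (f : 'cV[R]_n -> R) (mup : R) (x l : 'cV[R]_n) (i : 'I_n) : R :=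
  - (x i 0 * grad f x i 0 - mup) / denom f x l i.

Definition vpos (v : 'cV[R]_n) : Prop := forall i, 0 < v i 0.

End Defs.

(* Main.v *)
Require Import Defs.
From HB Require Import structures.
From mathcomp Require Import all_boot all_order all_algebra.
From mathcomp Require Import all_classical all_reals all_analysis.
From mathcomp Require Import ring lra.
Import Order.TTheory GRing.Theory Num.Theory.
Import numFieldNormedType.Exports.
Local Open Scope ring_scope.

Section Helpers.
Variable R : realType.

Lemma unif_small (I : finType) (P : I -> R -> Prop) :
  (forall i, exists2 r, 0 < r & forall s, 0 < s <= r -> P i s) ->
  exists2 r, 0 < r & forall i, P i r.
Proof.
move=> H.
have [g Hg] : {g : I -> R & forall i, 0 < g i /\ forall s, 0 < s <= g i -> P i s}.
  apply: (@boolp.choice I R (fun i r => 0 < r /\ forall s, 0 < s <= r -> P i s)) => i; have [r r0 Hr] := H i; by exists r.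
exists (\big[Order.min/1]_i g i).
  by apply: lt_bigmin => // i _; case: (Hg i).
move=> i; case: (Hg i) => g0 Hi; apply: Hi; apply/andP; split.
  by apply: lt_bigmin => // j _; case: (Hg j).
exact: bigmin_le.
Qed.

Lemma unif_big (I : finType) (g : I -> R) (c0 : R) :
  exists C, c0 <= C /\ forall i, g i <= C.
Proof.
exists (\big[Order.max/c0]_i g i); split; first exact: bigmax_ge_id.
move=> i; exact: le_bigmax.
Qed.

Lemma sq_le_sum (n : nat) (F : 'I_n -> R) k : F k ^+ 2 <= \sum_i F i ^+ 2.
Proof.
rewrite (bigD1 k) //= ler_wpDr //; apply: sumr_ge0 => i _; exact: sqr_ge0.
Qed.

Lemma comp_le_sqrt (n : nat) (F : 'I_n -> R) k (S : R) :
  \sum_i F i ^+ 2 <= S -> `|F k| <= Num.sqrt S.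
Proof.
move=> HS; rewrite -sqrtr_sqr; apply: ler_wsqrtr.
apply: le_trans HS; exact: sq_le_sum.
Qed.

Lemma enorm2_l n (v w : 'cV[R]_n) k : `|v k 0| <= enorm2 v w.
Proof.
apply: (@comp_le_sqrt _ (fun i => v i 0)).
rewrite ler_wpDr //; apply: sumr_ge0 => i _; exact: sqr_ge0.
Qed.

Lemma enorm2_r n (v w : 'cV[R]_n) k : `|w k 0| <= enorm2 v w.
Proof.
apply: (@comp_le_sqrt _ (fun i => w i 0)).
rewrite addrC ler_wpDr //; apply: sumr_ge0 => i _; exact: sqr_ge0.
Qed.

Lemma enormN_c n (v : 'cV[R]_(n + n)) k : `|v k 0| <= enormN v.
Proof. exact: (@comp_le_sqrt _ (fun i => v i 0)). Qed.

Lemma cont_near n (g : 'cV[R]_n -> R) (x0 : 'cV[R]_n) :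
  continuous g -> forall eps, 0 < eps ->
  exists2 r, 0 < r & forall y : 'cV[R]_n,
    (forall k, `|y k 0 - x0 k 0| < r) -> `|g y - g x0| < eps.
Proof.
move=> Hc eps e0.
have /cvgrPdist_lt/(_ _ e0) := Hc x0.
move/nbhs_normP => [r /= r0 Hr].
exists r => // y Hy.
rewrite distrC; have := Hr y; apply.
rewrite /ball_ /=; change (mx_norm (x0 - y) < r); rewrite mx_normrE; apply/bigmax_ltP; split => // [[i j]] _ /=.
by rewrite (ord1 j) !mxE distrC.
Qed.


Lemma newton_rows n f mup (x l dx dl : 'cV[R]_n) i :
  newton_dir f mup x l dx dl ->
  (\sum_j hess f x i j * dx j 0) - dl i 0 = -(grad f x i 0 - l i 0) /\
  l i 0 * dx i 0 + x i 0 * dl i 0 = -(l i 0 * x i 0 - mup).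
Proof.
rewrite /newton_dir /Fprime /Fmu /dg mul_block_col opp_col_mx => /eq_col_mx [E1 E2].
split.
  have := congr1 (fun M : 'M[R]_(n, 1) => M i 0) E1.
  by rewrite mulNmx mul1mx !mxE.
have := congr1 (fun M : 'M[R]_(n, 1) => M i 0) E2.
by rewrite !mul_diag_mx !mxE.
Qed.

Lemma part1 n f mup (x l dx dl : 'cV[R]_n) i :
  newton_dir f mup x l dx dl -> denom f x l i != 0 ->
  dxS f mup x l i - dx i 0 =
    x i 0 / denom f x l i * \sum_(j < n | j != i) hess f x i j * dx j 0.
Proof.
move=> Hn Hd; have [E1 E2] := @newton_rows _ _ _ _ _ _ _ i Hn.
move: E1; rewrite (bigD1 i) //=.
set s := \sum_(j < n | j != i) _ => E1.
have E : - (x i 0 * grad f x i 0 - mup) = denom f x l i * dx i 0 + x i 0 * s.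
  rewrite /denom.
  have -> : - (x i 0 * grad f x i 0 - mup) =
    x i 0 * (hess f x i i * dx i 0 + s - dl i 0) - x i 0 * l i 0
      + (l i 0 * dx i 0 + x i 0 * dl i 0) + l i 0 * x i 0.
    by rewrite E1 E2; ring.
  by ring.
rewrite /dxS E; field.
by move: Hd.
Qed.

Lemma enormN_opp n (v : 'cV[R]_(n + n)) : enormN (- v) = enormN v.
Proof. by rewrite /enormN; congr Num.sqrt; apply: eq_bigr => k _; rewrite mxE sqrrN. Qed.

Lemma inv_bounds (d D : R) : 0 < D -> D / 2 <= d <= 3 * D / 2 ->
  0 < d /\ 2 / (3 * D) <= d^-1 <= 2 / D.
Proof.
move=> D0 /andP[h1 h2].
have d0 : 0 < d by apply: lt_le_trans h1; rewrite divr_gt0.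
split => //; apply/andP; split.
  rewrite -[2 / (3 * D)]invf_div lef_pV2 ?posrE ?divr_gt0 ?mulr_gt0 //.
by rewrite -[2 / D]invf_div lef_pV2 ?posrE ?divr_gt0.
Qed.

Lemma dx_bound n f mup (x l dx dl : 'cV[R]_n) M :
  Fprime f x l \in unitmx ->
  (forall w : 'cV[R]_(n + n), enormN (invmx (Fprime f x l) *m w) <= M * enormN w) ->
  newton_dir f mup x l dx dl ->
  forall j, `|dx j 0| <= Num.max M 0 * enormN (Fmu f mup x l).
Proof.
move=> Hu HM Hn j.
have -> : dx j 0 = col_mx dx dl (lshift n j) 0 by rewrite col_mxEu.
apply: le_trans (enormN_c _ (col_mx dx dl) (lshift n j)) _.
have -> : col_mx dx dl = invmx (Fprime f x l) *m (- Fmu f mup x l).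
  by rewrite -Hn mulKmx.
apply: le_trans (HM _) _.
rewrite enormN_opp ler_wpM2r //; last by rewrite le_max lexx.
by rewrite /enormN sqrtr_ge0.
Qed.

Lemma Fsig_bound n f mu sigma C1 (x l : 'cV[R]_n) :
  0 < mu -> 0 < sigma < 1 -> 0 < C1 ->
  enormN (Fmu f mu x l) <= C1 * mu ->
  enormN (Fmu f (sigma * mu) x l) <= 2 * (C1 + n%:R + 1) * mu.
Proof.
move=> mu0 /andP[s0 s1] C0 HF.
set S := \sum_k (Fmu f mu x l k 0) ^+ 2.
have S0 : 0 <= S by apply: sumr_ge0 => k _; exact: sqr_ge0.
have HS : S <= (C1 * mu) ^+ 2.
  rewrite -(sqr_sqrtr S0); apply: lerXn2r => //; rewrite ?nnegrE ?sqrtr_ge0 //.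
  by rewrite mulr_ge0 // ltW.
have pt : forall k, (Fmu f (sigma * mu) x l k 0) ^+ 2 <=
    2 * (Fmu f mu x l k 0) ^+ 2 + 2 * mu ^+ 2.
  move=> k; case: (split_ordP k) => j -> /=; rewrite /Fmu ?col_mxEu ?col_mxEd !mxE.
    set a := ('D_ _ _ _ - _); have := sqr_ge0 a; have := sqr_ge0 mu; lra.
  set a := l j 0 * x j 0.
  have -> : a - sigma * mu = (a - mu) + (1 - sigma) * mu by ring.
  have h1 : ((1 - sigma) * mu) ^+ 2 <= mu ^+ 2.
    apply: lerXn2r; rewrite ?nnegrE; try nra.
  set b := a - mu; set c := (1 - sigma) * mu.
  have E : 2 * b ^+ 2 + 2 * mu ^+ 2 - (b + c) ^+ 2 = (b - c) ^+ 2 + 2 * (mu ^+ 2 - c ^+ 2) by ring.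
  move: h1; rewrite -/c => h1; have := sqr_ge0 (b - c); lra.
have HSs : \sum_k (Fmu f (sigma * mu) x l k 0) ^+ 2 <= 2 * S + (n + n)%:R * (2 * mu ^+ 2).
  apply: le_trans (ler_sum _ (fun k _ => pt k)) _.
  rewrite big_split /= -mulr_sumr sumr_const card_ord mulr_natl.
  by rewrite !mulr_natl.
have HK : \sum_k (Fmu f (sigma * mu) x l k 0) ^+ 2 <= (2 * (C1 + n%:R + 1) * mu) ^+ 2.
  apply: le_trans HSs _; rewrite natrD.
  have n0 : 0 <= n%:R :> R by rewrite ler0n.
  set m := n%:R : R.
  have E : (2 * (C1 + m + 1) * mu) ^+ 2 - (2 * (C1 * mu) ^+ 2 + (m + m) * (2 * mu ^+ 2))
     = mu ^+ 2 * (2 * C1 ^+ 2 + 8 * C1 * m + 8 * C1 + 4 * m ^+ 2 + 4 * m + 4) by ring.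
  have P : 0 <= 2 * C1 ^+ 2 + 8 * C1 * m + 8 * C1 + 4 * m ^+ 2 + 4 * m + 4.
    have := sqr_ge0 C1; have := sqr_ge0 m; have : 0 <= C1 * m by rewrite mulr_ge0 // ltW.
    lra.
  have := mulr_ge0 (sqr_ge0 mu) P; lra.
rewrite /enormN; apply: le_trans (ler_wsqrtr HK) _.
rewrite sqrtr_sqr ger0_norm //; apply: mulr_ge0; last exact: ltW.
have n0 : 0 <= n%:R :> R by rewrite ler0n.
lra.
Qed.

Definition dn {n} (Hf : 'cV[R]_n -> 'M[R]_n) (x l : 'cV[R]_n) i := x i 0 * Hf x i i + l i 0.

Lemma local_i n (Hf : 'cV[R]_n -> 'M[R]_n) (xs ls : 'cV[R]_n) i :
  (forall i j, continuous (fun y => Hf y i j)) ->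
  0 < dn Hf xs ls i ->
  exists2 r, 0 < r & forall s, 0 < s <= r -> forall x l : 'cV[R]_n,
    (forall k, `|x k 0 - xs k 0| < s) -> (forall k, `|l k 0 - ls k 0| < s) ->
    [/\ dn Hf xs ls i / 2 <= dn Hf x l i <= 3 * dn Hf xs ls i / 2,
        (forall j, `|Hf x i j| <= `|Hf xs i j| + 1) &
        (xs i 0 = 0 -> ls i 0 / 2 <= l i 0)].
Proof.
move=> Hc D0; set D := dn Hf xs ls i in D0 *.
set h := Hf xs i i.
set e := D / (4 * (`|xs i 0| + 1)).
have a0 : 0 < `|xs i 0| + 1 by rewrite ltr_wpDl.
have e0 : 0 < e by rewrite divr_gt0 // mulr_gt0.
have [ra ra0 Hra] := cont_near _ _ xs (Hc i i) _ e0.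
have [rb rb0 Hrb] : exists2 r, 0 < r & forall j, forall y : 'cV[R]_n,
    (forall k, `|y k 0 - xs k 0| < r) -> `|Hf y i j - Hf xs i j| < 1.
  apply: (@unif_small _ (fun j r => forall y : 'cV[R]_n,
    (forall k, `|y k 0 - xs k 0| < r) -> `|Hf y i j - Hf xs i j| < 1)) => j.
  have [r r0 Hr] := cont_near _ _ xs (Hc i j) _ ltr01.
  exists r => // s' /andP[_ sr] y Hy; apply: Hr => k; exact: lt_le_trans (Hy k) sr.
have h0 : 0 < `|h| + 1 by rewrite ltr_wpDl.
set r := Order.min 1 (Order.min ra (Order.min rb (Order.min (D / (8 * (`|h| + 1))) (D / 8)))).
exists r.
  by rewrite !lt_min ltr01 ra0 rb0 !divr_gt0 // mulr_gt0.
move=> s /andP[s0 sr] x l Hx Hl.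
have := lexx r; rewrite {2}/r !le_min => /and5P[r1 rra rrb rrc rrd].
have hx := Hx i; have hl := Hl i.
have hii : `|Hf x i i - h| < e.
  by apply: Hra => k; apply: lt_le_trans (Hx k) (le_trans sr rra).
have hj : forall j, `|Hf x i j - Hf xs i j| < 1.
  by move=> j; apply: Hrb => k; apply: lt_le_trans (Hx k) (le_trans sr rrb).
split.
- have Ed : dn Hf x l i - D = x i 0 * (Hf x i i - h) + (x i 0 - xs i 0) * h + (l i 0 - ls i 0).
    rewrite /D /h /dn.
    move: (Hf x i i) (Hf xs i i) (x i 0) (xs i 0) (l i 0) (ls i 0) => a b c d p q.
    ring.
  have b1 : `|x i 0| <= `|xs i 0| + 1.
    have := ler_normD (xs i 0) (x i 0 - xs i 0); rewrite addrC subrK.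
    have : `|x i 0 - xs i 0| <= 1.
      by apply: ltW; apply: lt_le_trans hx (le_trans sr r1).
    lra.
  have t1 : `|x i 0| * `|Hf x i i - h| <= (`|xs i 0| + 1) * e.
    by apply: ler_pM => //; exact: ltW.
  have t1' : (`|xs i 0| + 1) * e = D / 4.
    rewrite /e; field; apply/negP => /eqP H0; move: a0; rewrite H0 ltxx //.
  have t2 : `|x i 0 - xs i 0| * `|h| <= r * `|h|.
    by apply: ler_wpM2r => //; apply: ltW; apply: lt_le_trans hx sr.
  have t3 : r * (8 * (`|h| + 1)) <= D by rewrite -ler_pdivlMr // mulr_gt0.
  have t3' : r * (8 * (`|h| + 1)) = 8 * (r * `|h|) + 8 * r by ring.
  have t4 : `|l i 0 - ls i 0| <= r by apply: ltW; apply: lt_le_trans hl sr.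
  have t5 : `|dn Hf x l i - D| <= `|x i 0| * `|Hf x i i - h| + `|x i 0 - xs i 0| * `|h| + `|l i 0 - ls i 0|.
    rewrite Ed -!normrM; apply: le_trans (ler_normD _ _) _.
    by rewrite lerD2r ler_normD.
  have HH : `|dn Hf x l i - D| <= D / 2 by lra.
  move: HH D0; clearbody D; move: (dn Hf x l i) => d.
  rewrite ler_norml => /andP[? ?] ?; apply/andP; split; lra.
- move=> j; have := ler_normD (Hf xs i j) (Hf x i j - Hf xs i j).
  rewrite addrC subrK => H1; have := hj j; lra.
- move=> xs0; have ED : D = ls i 0 by rewrite /D /dn xs0 mul0r add0r.
  move: hl; rewrite ltr_norml => /andP[? ?].
  have : s <= D / 8 by apply: le_trans sr rrd.
  lra.
Qed.

Lemma hess_cont n (f : 'cV[R]_n -> R) : twice_cont_diff f ->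
  forall i j, continuous (fun y => hess f y i j).
Proof.
move=> [_ [_ Hc]] i j.
have -> : (fun y => hess f y i j) = (fun y => 'D_(evec R j) (fun z => 'D_(evec R i) f z) y).
  by apply: boolp.funext => y; rewrite mxE.
exact: Hc.
Qed.

Lemma pd_diag n (Hm : 'M[R]_n) (xs : 'cV[R]_n) i :
  (forall v : 'cV[R]_n, v != 0 -> (forall k, xs k 0 = 0 -> v k 0 = 0) ->
      0 < (v^T *m Hm *m v) 0 0) -> xs i 0 != 0 -> 0 < Hm i i.
Proof.
move=> Hpd xsi.
have := Hpd (delta_mx i 0).
have -> : ((delta_mx i 0 : 'cV[R]_n)^T *m Hm *m (delta_mx i 0 : 'cV[R]_n)) 0 0 = Hm i i.
  have E : forall k : 'I_n, (delta_mx i 0 : 'cV[R]_n) k 0 = (k == i)%:R.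
    by move=> k; rewrite mxE andbT.
  rewrite mxE (bigD1 i) //= big1 => [|j ji]; last by rewrite E (negbTE ji) mulr0.
  rewrite E eqxx mulr1 addr0 mxE (bigD1 i) //= big1 => [|j ji]; last first.
    by rewrite mxE E (negbTE ji) mul0r.
  by rewrite mxE E eqxx mul1r addr0.
apply.
  apply/eqP => /(congr1 (fun M : 'cV[R]_n => M i 0)); rewrite !mxE !eqxx /=.
  by move/eqP; rewrite oner_eq0.
move=> k xk; rewrite mxE; case: (eqVneq k i) => [ki|kni] /=; last by [].

by move: xsi; rewrite -ki xk eqxx.
Qed.

Lemma D_pos n (Hm : 'M[R]_n) (xs ls : 'cV[R]_n) :
  (forall i, 0 <= xs i 0) -> (forall i, 0 < xs i 0 + ls i 0) -> (forall i, 0 <= ls i 0) ->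
  (forall v : 'cV[R]_n, v != 0 -> (forall k, xs k 0 = 0 -> v k 0 = 0) ->
      0 < (v^T *m Hm *m v) 0 0) ->
  forall i, 0 < xs i 0 * Hm i i + ls i 0.
Proof.
move=> xs0 sc ls0 Hpd i.
case: (eqVneq (xs i 0) 0) => [xz|xnz].
  by have := sc i; rewrite xz mul0r !add0r.
have xp : 0 < xs i 0 by rewrite lt_neqAle eq_sym xnz xs0.
have hp := @pd_diag n Hm xs i Hpd xnz.
have := ls0 i; have := mulr_gt0 xp hp; lra.
Qed.

Lemma rearr (a b s m k mu : R) :
  a * mu * b * (s * (m * (k * mu))) = a * b * (s * (m * k)) * mu ^+ 2.
Proof. ring. Qed.

End Helpers.

Theorem proposition1 (R : realType) (n : nat) (f : 'cV[R]_n -> R)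
  (xs ls : 'cV[R]_n) (delta M muhat C4 : R)
  (xmu lmu : R -> 'cV[R]_n) (sigma : R) :
  (* f is C^2 with locally Lipschitz Hessian *)
  twice_cont_diff f -> hess_loc_lipschitz f ->
  (* (xs, ls) satisfies the standing second-order conditions *)
  grad f xs = ls ->
  (forall i, 0 <= xs i 0) -> (forall i, 0 <= ls i 0) ->
  (forall i, xs i 0 * ls i 0 = 0) -> (forall i, 0 < xs i 0 + ls i 0) ->
  (forall v : 'cV[R]_n, v != 0 -> (forall i, xs i 0 = 0 -> v i 0 = 0) ->
      0 < (v^T *m hess f xs *m v) 0 0) ->
  (* delta, M: F' nonsingular on the ball, with ||F'^{-1}|| <= M *)
  0 < delta ->
  (forall x l : 'cV[R]_n, enorm2 (x - xs) (l - ls) < delta ->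
      Fprime f x l \in unitmx /\
      forall w : 'cV[R]_(n + n), enormN (invmx (Fprime f x l) *m w) <= M * enormN w) ->
  (* muhat, C4: Lipschitz barrier trajectory *)
  0 < muhat ->
  (exists L : R, forall mu1 mu2, 0 < mu1 <= muhat -> 0 < mu2 <= muhat ->
      enorm2 (xmu mu1 - xmu mu2) (lmu mu1 - lmu mu2) <= L * `|mu1 - mu2|) ->
  (forall mu, 0 < mu <= muhat ->
     [/\ vpos (xmu mu), vpos (lmu mu),
         enorm2 (xmu mu - xs) (lmu mu - ls) < delta,
         Fmu f mu (xmu mu) (lmu mu) = 0 &
         enorm2 (xmu mu - xs) (lmu mu - ls) <= C4 * mu]) ->
  0 < sigma < 1 ->
  (* part 1: the componentwise identity *)
  (forall (mu : R) (x l dx dl : 'cV[R]_n),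
     0 < mu -> enorm2 (x - xs) (l - ls) < delta -> vpos x -> vpos l ->
     newton_dir f (sigma * mu) x l dx dl ->
     forall i : 'I_n, denom f x l i != 0 ->
       dxS f (sigma * mu) x l i - dx i 0 =
         x i 0 / denom f x l i * \sum_(j < n | j != i) hess f x i j * dx j 0)
  /\
  (* part 2: bounds near the trajectory *)
  (forall C1 : R, 0 < C1 ->
     exists rho mubar c C : R,
       [/\ 0 < rho, 0 < mubar <= muhat, 0 < c, c <= C &
       forall (mu : R) (x l : 'cV[R]_n),
         0 < mu <= mubar -> enorm2 (x - xs) (l - ls) < delta ->
         vpos x -> vpos l ->
         enorm2 (x - xmu mu) (l - lmu mu) < rho ->
         enormN (Fmu f mu x l) <= C1 * mu ->
         (forall i : 'I_n, denom f x l i != 0 /\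
            c <= (denom f x l i)^-1 <= C) /\
         (forall (dx dl : 'cV[R]_n), newton_dir f (sigma * mu) x l dx dl ->
            forall i : 'I_n, xs i 0 = 0 ->
              `|dxS f (sigma * mu) x l i - dx i 0| <= C * mu ^+ 2)]).
Proof.
move=> tcd _ hgrad xs_ge0 ls_ge0 compl strict pd delta0 Hball muhat0 _ Htraj sig01.
split.
  move=> mu x l dx dl _ _ _ _ Hn i Hd; exact: (@part1 R n f (sigma * mu) x l dx dl i Hn Hd).
move=> C1 C10.
have Hc := @hess_cont R n f tcd.
pose D i := denom f xs ls i.
have Dpos : forall i, 0 < D i := @D_pos R n (hess f xs) xs ls xs_ge0 strict ls_ge0 pd.
have [r1 r10 Hr1] : exists2 r, 0 < r & forall i (x l : 'cV[R]_n),
    (forall k, `|x k 0 - xs k 0| < r) -> (forall k, `|l k 0 - ls k 0| < r) ->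
    [/\ D i / 2 <= denom f x l i <= 3 * D i / 2,
        (forall j, `|hess f x i j| <= `|hess f xs i j| + 1) &
        (xs i 0 = 0 -> ls i 0 / 2 <= l i 0)].
  apply: (@unif_small R _ (fun i r => forall (x l : 'cV[R]_n),
    (forall k, `|x k 0 - xs k 0| < r) -> (forall k, `|l k 0 - ls k 0| < r) ->
    [/\ D i / 2 <= denom f x l i <= 3 * D i / 2,
        (forall j, `|hess f x i j| <= `|hess f xs i j| + 1) &
        (xs i 0 = 0 -> ls i 0 / 2 <= l i 0)])) => i.
  exact: (@local_i R n (hess f) xs ls i Hc (Dpos i)).
pose c := \big[Order.min/1]_i (2 / (3 * D i)).
have c0 : 0 < c.
  apply: lt_bigmin => // i _; rewrite divr_gt0 // mulr_gt0 //.
have cle : forall i, c <= 2 / (3 * D i) by move=> i; exact: bigmin_le.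
have [Cd [cCd HCd]] := @unif_big R _ (fun i => 2 / D i) c.
pose K := 2 * (C1 + n%:R + 1).
pose Mp := Num.max M 0.
have Mp0 : 0 <= Mp by rewrite le_max lexx orbT.
pose Ci i := 2 * (1 + C1) / ls i 0 * Cd *
   ((\sum_(j < n | j != i) (`|hess f xs i j| + 1)) * (Mp * K)).
have [C [CdC HC]] := @unif_big R _ Ci Cd.
have a0 : 0 < `|C4| + 1 by rewrite ltr_wpDl.
pose mubar := Order.min muhat (r1 / (2 * (`|C4| + 1))).
have mubar0 : 0 < mubar by rewrite lt_min muhat0 divr_gt0 // mulr_gt0.
have mubar1 : mubar <= muhat by rewrite ge_min lexx.
have mubar2 : mubar <= r1 / (2 * (`|C4| + 1)) by rewrite ge_min lexx orbT.
exists (r1 / 2), mubar, c, C; split.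
- by rewrite divr_gt0.
- by rewrite mubar0 mubar1.
- exact: c0.
- exact: le_trans cCd CdC.
move=> mu x l /andP[mu0 mumu] Hxd xpos lpos Hrho HF.
have mu_hat : 0 < mu <= muhat by rewrite mu0 (le_trans mumu mubar1).
have [_ _ _ _ HC4] := Htraj mu mu_hat.
have C4mu : C4 * mu <= r1 / 2.
  have h1 : C4 * mu <= (`|C4| + 1) * mu.
    by apply: ler_wpM2r; [exact: ltW | rewrite ler_wpDr // real_ler_norm // num_real].
  apply: le_trans h1 _.
  have h2 : (`|C4| + 1) * mu <= (`|C4| + 1) * (r1 / (2 * (`|C4| + 1))).
    by apply: ler_wpM2l; [exact: ltW | exact: le_trans mumu mubar2].
  apply: le_trans h2 _; rewrite le_eqVlt; apply/orP; left; apply/eqP.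
  field; apply/negP => /eqP H0; move: a0; rewrite H0 ltxx //.
have nearx : forall k, `|x k 0 - xs k 0| < r1.
  move=> k.
  have h1 := @enorm2_l R n (x - xmu mu) (l - lmu mu) k.
  have h2 := @enorm2_l R n (xmu mu - xs) (lmu mu - ls) k.
  rewrite !mxE in h1 h2.
  have h3 := ler_distD (xmu mu k 0) (x k 0) (xs k 0).
  lra.
have nearl : forall k, `|l k 0 - ls k 0| < r1.
  move=> k.
  have h1 := @enorm2_r R n (x - xmu mu) (l - lmu mu) k.
  have h2 := @enorm2_r R n (xmu mu - xs) (lmu mu - ls) k.
  rewrite !mxE in h1 h2.
  have h3 := ler_distD (lmu mu k 0) (l k 0) (ls k 0).
  lra.
have Hloc := fun i => Hr1 i x l nearx nearl.
split.
  move=> i; have [hd _ _] := Hloc i.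
  have [dpos /andP[i1 i2]] := @inv_bounds R _ _ (Dpos i) hd.
  split; first exact: lt0r_neq0.
  by rewrite (le_trans (cle i) i1) (le_trans i2 (le_trans (HCd i) CdC)).
move=> dx dl Hn i xs0.
have [Hu HM] := Hball x l Hxd.
have Hdx := @dx_bound R n f (sigma * mu) x l dx dl M Hu HM Hn.
have HFs := @Fsig_bound R n f mu sigma C1 x l mu0 sig01 C10 HF.
have Hdxj : forall j, `|dx j 0| <= Mp * (K * mu).
  move=> j; apply: le_trans (Hdx j) _; exact: ler_wpM2l.
have [hd Hj Hact] := Hloc i.
have [dpos /andP[_ i2]] := @inv_bounds R _ _ (Dpos i) hd.
have lsi : 0 < ls i 0 by have := strict i; rewrite xs0 add0r.
have lhalf := Hact xs0.
have Hxi : x i 0 <= 2 * (1 + C1) / ls i 0 * mu.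
  have hF := @enormN_c R n (Fmu f mu x l) (rshift n i).
  rewrite /Fmu col_mxEd mxE in hF.
  have hF2 := le_trans hF HF.
  move: hF2; rewrite ler_norml => /andP[_ hF3].
  have hxl : x i 0 * (ls i 0 / 2) <= x i 0 * l i 0.
    by apply: ler_wpM2l => //; exact: ltW (xpos i).
  have -> : 2 * (1 + C1) / ls i 0 * mu = ((1 + C1) * mu) / (ls i 0 / 2).
    by field; apply: lt0r_neq0.
  rewrite ler_pdivlMr ?divr_gt0 //.
  have : x i 0 * l i 0 = l i 0 * x i 0 by rewrite mulrC.
  lra.
have HS : `|\sum_(j < n | j != i) hess f x i j * dx j 0| <=
    (\sum_(j < n | j != i) (`|hess f xs i j| + 1)) * (Mp * (K * mu)).
  rewrite mulr_suml; apply: le_trans (ler_norm_sum _ _ _) _.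
  apply: ler_sum => j _; rewrite normrM; apply: ler_pM => //.
rewrite (@part1 R n f (sigma * mu) x l dx dl i Hn (lt0r_neq0 dpos)).
rewrite normrM normrM (gtr0_norm (xpos i)) normfV (gtr0_norm dpos).
have B : x i 0 * (denom f x l i)^-1 *
    `|\sum_(j < n | j != i) hess f x i j * dx j 0| <=
    2 * (1 + C1) / ls i 0 * mu * Cd *
    ((\sum_(j < n | j != i) (`|hess f xs i j| + 1)) * (Mp * (K * mu))).
  apply: ler_pM => //.
  - by rewrite mulr_ge0 // ?invr_ge0 ltW // (xpos i).
  - apply: ler_pM => //; [exact: ltW (xpos i) | by rewrite invr_ge0 ltW |].
    exact: le_trans i2 (HCd i).
apply: le_trans B _.
rewrite rearr; apply: ler_wpM2r; first exact: sqr_ge0.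
exact: HC i.
Qed.
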